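(* For a graph $G$ with no isolated vertex, $\gamma_{(2,2,1)}(G)=3$ if and only if $\gamma(G)=1$ or $\gamma_{\times2,t}(G)=3$.
   Context: All graphs are finite and simple; $N(v)$ is the open neighbourhood. $\gamma_{(2,2,1)}(G)$ is the minimum of $\sum_v f(v)$ over functions $f:V(G)\to\{0,1,2\}$ such that $\sum_{u\in N(v)}f(u)\ge 2$ whenever $f(v)\in\{0,1\}$ and $\sum_{u\in N(v)}f(u)\ge1$ whenever $f(v)=2$. $\gamma(G)$ is the domination number and $\gamma_{\times2,t}(G)$ is the minimum size of $S\subseteq V(G)$ such that every vertex has at least two neighbours in $S$ (defined when $G$ has minimum degree at least $2$). *)

(* Defs.v *)
From mathcomp Require Import all_boot.
Set Implicit Arguments. Unset Strict Implicit. Unset Printing Implicit Defensive.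

Definition simple_graph (T : finType) (e : rel T) : Prop :=
  symmetric e /\ irreflexive e.

Definition nbhd (T : finType) (e : rel T) (v : T) : {set T} := [set u | e v u].

Definition no_isolated (T : finType) (e : rel T) : Prop :=
  forall v : T, exists u, e v u.

Definition is_221_fun (T : finType) (e : rel T) (f : {ffun T -> 'I_3}) : bool :=
  [forall v : T,
     if (f v : nat) == 2 then 1 <= \sum_(u in nbhd e v) (f u : nat)
     else 2 <= \sum_(u in nbhd e v) (f u : nat)].

Definition weight (T : finType) (f : {ffun T -> 'I_3}) : nat := \sum_(v : T) (f v : nat).

(* gamma_(2,2,1)(G): minimum weight (default 2|V|, the weight of the
   constant-2 function, which is valid when there is no isolated vertex). *)
Definition gamma221 (T : finType) (e : rel T) : nat :=
  \big[minn/(#|T|).*2]_(f : {ffun T -> 'I_3} | is_221_fun e f) weight f.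

Definition dominating (T : finType) (e : rel T) (S : {set T}) : bool :=
  [forall v : T, (v \in S) || [exists u in S, e v u]].

(* domination number (default |V|: V itself dominates) *)
Definition gamma (T : finType) (e : rel T) : nat :=
  \big[minn/#|T|]_(S : {set T} | dominating e S) #|S|.

Definition dtd (T : finType) (e : rel T) (S : {set T}) : bool :=
  [forall v : T, 2 <= #|nbhd e v :&: S|].

(* gamma_{x2,t}(G): Some (minimum size) if a double total dominating set
   exists (iff min degree >= 2), None if it is undefined. *)
Definition gamma_x2t (T : finType) (e : rel T) : option nat :=
  if [exists S : {set T}, dtd e S]
  then Some (\big[minn/#|T|]_(S : {set T} | dtd e S) #|S|)
  else None.

(* Main.v *)
Require Import Defs.
From mathcomp Require Import all_boot.
From mathcomp Require Import zify.
Set Implicit Arguments. Unset Strict Implicit.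

Section Helpers.
Variables (T : finType) (e : rel T).

Lemma bmin_le (I : finType) (P : pred I) (F : I -> nat) d i :
  P i -> \big[minn/d]_(j | P j) F j <= F i.
Proof.
move=> Pi; have : i \in index_enum I by rewrite mem_index_enum.
elim: (index_enum I) => // x r IH; rewrite inE big_cons => /orP [/eqP <-|ir].
  by rewrite Pi geq_minl.
by case: ifP => _; [rewrite geq_min IH ?orbT | apply: IH].
Qed.

Lemma bmin_le_d (I : finType) (P : pred I) (F : I -> nat) d :
  \big[minn/d]_(j | P j) F j <= d.
Proof.
elim/big_rec: _ => // i x _ Hx; by rewrite geq_min Hx orbT.
Qed.

Lemma bmin_ge (I : finType) (P : pred I) (F : I -> nat) d m :
  (forall i, P i -> m <= F i) -> m <= d -> m <= \big[minn/d]_(j | P j) F j.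
Proof.
move=> H Hd; elim/big_ind: _ => //; by move=> x y; rewrite leq_min => -> ->.
Qed.

Lemma bmin_cases (I : finType) (P : pred I) (F : I -> nat) d :
  \big[minn/d]_(j | P j) F j = d \/ exists i, P i /\ \big[minn/d]_(j | P j) F j = F i.
Proof.
elim/big_ind: _; [by left | | by move=> i Pi; right; exists i].
move=> x y Hx Hy; rewrite /minn; case: ifP => _; [exact Hx | exact Hy].
Qed.

Lemma sum_le_weight (f : {ffun T -> 'I_3}) v (X : {set T}) :
  v \notin X -> (f v : nat) + \sum_(u in X) (f u : nat) <= weight f.
Proof.
move=> vX; rewrite /weight [X in _ <= X](bigD1 v) //= leq_add2l.
rewrite [X in _ <= X]big_mkcond [X in X <= _]big_mkcond /=.
apply: leq_sum => u _; case: ifP => // uX.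
by have -> : u != v by apply: contraNneq vX => <-.
Qed.

Lemma sum_elem (A : {set T}) (F : T -> nat) u : u \in A -> F u <= \sum_(w in A) F w.
Proof. by move=> uA; rewrite (bigD1 u) //= leq_addr. Qed.

Lemma sum_card (A S : {set T}) :
  \sum_(u in A) (u \in S : nat) = #|A :&: S|.
Proof.
rewrite -sum1_card [RHS]big_mkcond [LHS]big_mkcond /=.
by apply: eq_bigr => u _; rewrite in_setI; case: (u \in A); case: (u \in S).
Qed.

Hypothesis Hs : simple_graph e.
Hypothesis Hn : no_isolated e.

Lemma nbhd_notin v : v \notin nbhd e v.
Proof. by rewrite inE (proj2 Hs). Qed.

Lemma two_verts (v : T) : 2 <= #|T|.
Proof.
have [u Hu] := Hn v.
have uv : v != u by apply: contraTneq Hu => <-; rewrite (proj2 Hs).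
by have := max_card [set v; u]; rewrite cards2 uv.
Qed.

Lemma weight_ge3 (f : {ffun T -> 'I_3}) (v0 : T) :
  is_221_fun e f -> 3 <= weight f.
Proof.
move/forallP=> H.
have [v Hv] : exists v, 0 < (f v : nat).
  case: (pickP (fun v => 0 < (f v : nat))) => [v Hv|H0]; first by exists v.
  have := H v0; have E : forall u, (f u : nat) = 0.
    by move=> u; have := H0 u; case: (f u : nat).
  by rewrite E /= big1 // => u _; rewrite E.
have := sum_le_weight f (nbhd_notin v); have := H v.
have := ltn_ord (f v).
case: eqP => Hf; lia.
Qed.

Lemma dtd_ge3 (S : {set T}) (v : T) : dtd e S -> 3 <= #|S|.
Proof.
move/forallP=> H.
have : 0 < #|nbhd e v :&: S| by have := H v; case: (#|_|).
case/card_gt0P => u; rewrite inE => /andP [_ uS].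
have := H u; rewrite (cardsD1 u S) uS.
have : nbhd e u :&: S \subset S :\ u.
  apply/subsetP => w; rewrite !inE => /andP [euw ->]; rewrite andbT.
  by apply: contraTneq euw => ->; rewrite (proj2 Hs).
move/subset_leq_card; lia.
Qed.

Lemma dom_nonempty (S : {set T}) (v : T) : dominating e S -> 1 <= #|S|.
Proof.
move/forallP/(_ v)/orP => [vS|/existsP [u /andP [uS _]]]; apply/card_gt0P; eauto.
Qed.

Lemma dtd_T (S : {set T}) : dtd e S -> dtd e setT.
Proof.
move/forallP=> H; apply/forallP => v; apply: leq_trans (H v) _.
by apply: subset_leq_card; apply: setIS; apply: subsetT.
Qed.

End Helpers.

Theorem theorem25 (T : finType) (e : rel T) :
  simple_graph e -> no_isolated e ->
  gamma221 e = 3 <-> (gamma e = 1 \/ gamma_x2t e = Some 3).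
Proof.
move=> Hs Hn; split.
- move=> Hg; rewrite /gamma221 in Hg.
  have [Hd|[f [Hf Hw]]] := @bmin_cases _ (fun f => is_221_fun e f) (fun f => weight f)
      (#|T|).*2.
    by rewrite Hg in Hd; lia.
  rewrite Hg in Hw.
  have Hf' := Hf; move/forallP: Hf' => H.
  case: (pickP (fun a => (f a : nat) == 2)) => [a /eqP Ha | H2].
  + left.
    have Hdom : dominating e [set a].
      apply/forallP => v; case: (eqVneq v a) => [->|va]; first by rewrite inE eqxx.
      apply/orP; right; apply/existsP; exists a; rewrite inE eqxx /=.
      apply/negPn/negP => eva.
      have vX : v \notin a |: nbhd e v by rewrite in_setU1 negb_or va (nbhd_notin Hs).
      have := sum_le_weight f vX; rewrite big_setU1 ?inE //= Ha -Hw.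
      have := H v; have := ltn_ord (f v); case: eqP => E; lia.
    apply/eqP; rewrite eqn_leq; apply/andP; split.
      by have := @bmin_le _ (fun S => dominating e S) (fun S => #|S|) #|T| _ Hdom; rewrite cards1.
    apply: bmin_ge => [S HS|]; first exact: (dom_nonempty a HS).
    by apply/card_gt0P; exists a.
  + right.
    set S := [set v | (f v : nat) != 0].
    have f01 : forall u, (f u : nat) = (u \in S).
      move=> u; have := H2 u; rewrite inE; have := ltn_ord (f u).
      by case: (f u : nat) => [|[|[|]]].
    have cS : #|S| = 3.
      rewrite Hw /weight -(setIT S) setIC -sum_card; apply: eq_big => [u|u _]; [by rewrite in_setT | by rewrite f01].
    have HS : dtd e S.
      apply/forallP => v; have := H v; rewrite (H2 v) -sum_card.
      by under eq_bigr => u _ do rewrite f01.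
    rewrite /gamma_x2t; case: existsP => [_|[]]; last by exists S.
    congr Some; apply/eqP; rewrite eqn_leq; apply/andP; split.
      by have := @bmin_le _ (fun S => dtd e S) (fun S => #|S|) #|T| _ HS; rewrite cS.
    have [v _] : exists v : T, v \in S by apply/card_gt0P; rewrite cS.
    apply: bmin_ge => [S' HS'|]; first exact: (dtd_ge3 Hs v HS').
    by rewrite -cS max_card.
- move=> Hor.
  have [f [v0 [Hf Hw]]] : exists f : {ffun T -> 'I_3}, exists v0 : T,
      is_221_fun e f /\ weight f = 3.
    case: Hor => [Hg|Hx].
    + have [Hd|[S [HS cS]]] := @bmin_cases _ (fun S => dominating e S) (fun S => #|S|) #|T|.
        rewrite /gamma in Hg; rewrite Hg in Hd.
        have [v _] : exists v : T, v \in T by apply/card_gt0P; rewrite -Hd.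
        by have := two_verts Hs Hn v; rewrite -Hd.
      rewrite /gamma in Hg; rewrite Hg in cS.
      have [a Sa] : exists a, S = [set a] by apply/cards1P; rewrite -cS.
      have [b eab] := Hn a.
      have ba : b != a by apply: contraTneq eab => ->; rewrite (proj2 Hs).
      have adj : forall v, v != a -> e v a.
        move=> v va; move/forallP: HS => /(_ v); rewrite Sa inE (negbTE va) /=.
        by case/existsP => u /andP [/[!inE] /eqP -> ].
      set f : {ffun T -> 'I_3} :=
        [ffun v => inord (if v == a then 2 else if v == b then 1 else 0)].
      have fE : forall v, (f v : nat) = (if v == a then 2 else if v == b then 1 else 0).
        by move=> v; rewrite ffunE inordK //; case: ifP => //; case: ifP.
      exists f, a; split.
        apply/forallP => v; rewrite fE; case: (eqVneq v a) => [->|va] /=.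
          by rewrite (bigD1 b) ?inE //= fE (negbTE ba) eqxx.
        have -> : (if v == b then 1 else 0) == 2 = false by case: ifP.
        by rewrite (bigD1 a) ?inE ?adj //= fE eqxx.
      rewrite /weight (bigD1 a) //= (bigD1 b) //= !fE eqxx (negbTE ba) eqxx big1 //.
      by move=> u /andP [ua ub]; rewrite fE (negbTE ua) (negbTE ub).
    + move: Hx; rewrite /gamma_x2t; case: existsP => // [[S0 HS0]] [Hg].
      have [S [HS cS]] : exists S, dtd e S /\ #|S| = 3.
        have [Hd|[S [HS cS]]] := @bmin_cases _ (fun S => dtd e S) (fun S => #|S|) #|T|.
          by exists setT; rewrite cardsT -Hd Hg; split => //; exact: dtd_T HS0.
        by exists S; rewrite -cS Hg.
      have [v0 _] : exists v : T, v \in S by apply/card_gt0P; rewrite cS.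
      set f : {ffun T -> 'I_3} := [ffun v => inord (v \in S)].
      have fE : forall v, (f v : nat) = (v \in S).
        by move=> v; rewrite ffunE inordK //; case: (v \in S).
      exists f, v0; split.
        apply/forallP => v; rewrite fE.
        have -> : ((v \in S) : nat) == 2 = false by case: (v \in S).
        move/forallP: HS => /(_ v); rewrite -sum_card.
        by under eq_bigr => u _ do rewrite -fE.
      transitivity #|S|; last exact: cS.
      rewrite /weight -(setIT S) setIC -sum_card; apply: eq_big => [u|u _]; [by rewrite in_setT | by rewrite fE].
  apply/eqP; rewrite eqn_leq; apply/andP; split.
    by have := @bmin_le _ (fun f => is_221_fun e f) (fun f => weight f) (#|T|).*2 _ Hf; rewrite Hw.
  apply: bmin_ge => [g Hg|]; first exact: (weight_ge3 Hs v0 Hg).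
  by have := two_verts Hs Hn v0; lia.
Qed.
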